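(* Let $1\le n\le L$. The map sending $w\in\Omega'^{\{1\}}$ to the collection of sets $B_1,\dots,B_n$, where $B_i\subseteq\{1,\dots,L\}$ is the set of positions of the letters $\bullet_i$ and $\Box_i$ in $w$, is a bijection from $\Omega'^{\{1\}}$ onto the set of (unordered) set partitions of $\{1,\dots,L\}$ into exactly $n$ nonempty blocks.
   Context: Particle labels are taken modulo $n$. $\Omega_{L,n}$ is the set of words $w_1\cdots w_L$ on the ring $\mathbb{Z}/L\mathbb{Z}$ over the alphabet $\{\bullet_1,\dots,\bullet_n,\Box_1,\dots,\Box_n\}$ in which each $\bullet_k$ occurs exactly once, the $\bullet_1,\dots,\bullet_n$ appear in this cyclic order, and the remaining $L-n$ letters are arbitrary $\Box_i$'s. For $w\in\Omega_{L,n}$ let $b_k$ be the position of $\bullet_k$ and $C_k$ the set of positions strictly between $b_k$ and $b_{k+1}$ going cyclically forward ($b_{n+1}=b_1$). For $i,k\in\{1,\dots,n\}$ set $w_\Box(i,k)=p_1\cdots p_{i-1}q_{i+1}\cdots q_kp_{k+1}\cdots p_n$ if $i\le k$ and $w_\Box(i,k)=q_1\cdots q_kp_{k+1}\cdots p_{i-1}q_{i+1}\cdots q_n$ if $k<i$ (empty products are $1$), monomials in indeterminates. The weight is the monomial $\mathrm{wt}(w)=\prod_{k=1}^n\prod_{j\in C_k}w_\Box(i_j,k)$ where $w_j=\Box_{i_j}$. $\Omega'^{\{1\}}$ is the set of $w\in\Omega_{L,n}$ with $w_1=\bullet_1$ whose weight monomial does not contain $q_1$ (i.e. $\mathrm{wt}(w)\ne0$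 when $q_1=0$ and all other rates are positive). *)

(* Defs.v *)
From mathcomp Require Import all_boot.
Set Implicit Arguments. Unset Strict Implicit. Unset Printing Implicit Defensive.

(* Letters: [inl k] is the particle bullet_{k+1}, [inr i] is the box Box_{i+1}
   (labels 0-indexed: label k : 'I_n stands for the paper's k+1).
   Positions 1..L of the ring Z/LZ are 'I_L (position j : 'I_L is the paper's j+1). *)
Definition letter (n : nat) := ('I_n + 'I_n)%type.
Definition word (L n : nat) := {ffun 'I_L -> letter n}.

Section Defs.
Variables (L n : nat).
Implicit Types (w : word L n).

Definition wseq w : seq (letter n) := [seq w j | j <- enum 'I_L].

Definition dotseq w : seq nat :=
  pmap (fun x : letter n => if x is inl k then Some (val k) else None) (wseq w).

Definition inOmega w : Prop :=
  (forall k : 'I_n, count_mem (inl k) (wseq w) = 1) /\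
  (exists r, dotseq w = rot r (iota 0 n)).

Definition bpos w (k : 'I_n) : nat := index (inl k) (wseq w).

Definition cdist (a b : nat) : nat := (b + L - a) %% L.

(* j in C_k : j strictly between b_k and b_{k+1} going cyclically forward
   (b_{n+1} = b_1; if b_{k+1} = b_k, i.e. n = 1, all positions except b_k) *)
Definition inC w (k : 'I_n) (j : nat) : bool :=
  (0 < cdist (bpos w k) j) &&
  ((cdist (bpos w k) j < cdist (bpos w k) (bpos w (ordS k)))
   || (bpos w (ordS k) == bpos w k)).

(* exponents of p_m and q_m in the monomial w_Box(i,k) (all 0-indexed) *)
Definition pexp (i k m : nat) : nat :=
  if i <= k then ((m < i) || (k < m)) else ((k < m) && (m < i)).
Definition qexp (i k m : nat) : nat :=
  if i <= k then ((i < m) && (m <= k)) else ((m <= k) || (i < m)).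

(* exponents of p_m and q_m in wt(w) = prod_k prod_{j in C_k} w_Box(i_j,k) *)
Definition wt_p w (m : 'I_n) : nat :=
  \sum_(j < L) \sum_(k < n)
     (if w j is inr i then (if inC w k j then pexp i k m else 0) else 0).
Definition wt_q w (m : 'I_n) : nat :=
  \sum_(j < L) \sum_(k < n)
     (if w j is inr i then (if inC w k j then qexp i k m else 0) else 0).

(* Omega'^{1}: w in Omega_{L,n}, w_1 = bullet_1, and q_1 does not divide wt(w) *)
Definition inOmega1 w : Prop :=
  inOmega w /\
  (forall (j : 'I_L) (k : 'I_n), val j = 0 -> val k = 0 -> w j = inl k) /\
  (forall m : 'I_n, val m = 0 -> wt_q w m = 0).

Definition block w (i : 'I_n) : {set 'I_L} :=
  [set j | (w j == inl i) || (w j == inr i)].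

Definition blocks w : {set {set 'I_L}} := [set block w i | i : 'I_n].

End Defs.

(* Main.v *)
Require Import Defs.
From mathcomp Require Import all_boot.
From mathcomp Require Import zify.
Set Implicit Arguments. Unset Strict Implicit. Unset Printing Implicit Defensive.

Lemma count_enum_card (T : finType) (a : pred T) : count a (enum T) = #|a|.
Proof. rewrite cardE /enum_mem size_filter -enumT; rewrite count_filter; apply: eq_count => x; by rewrite !inE andbT. Qed.

Section S.
Variables (l m : nat).
Local Notation L := l.+1.
Local Notation n := m.+1.
Implicit Types (w : word L n).

Definition R (a b : letter n) : bool :=
  match a, b with inl x, inl y => val x < val y | _, _ => true end.

Definition G1 w := forall k : 'I_n, exists j, w j = inl k.
Definition G2 w := forall x y : 'I_L, x < y -> R (w x) (w y).
Definition G3 w := forall (j : 'I_L) (i : 'I_n), w j = inr i -> exists2 j' : 'I_L, j' < j & w j' = inl i.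

Lemma wseqE w : wseq w = [seq w (inord x) | x <- iota 0 L].
Proof.
by rewrite /wseq -val_enum_ord -map_comp; apply: eq_map => j /=; rewrite inord_val.
Qed.

Definition dsel (x : letter n) := if x is inl k then Some (val k) else None.

Lemma pairwise_dsel (s : seq (letter n)) : pairwise R s = pairwise ltn (pmap dsel s).
Proof.
elim: s => //= a s IH; rewrite IH; case: a => k /=; last by rewrite (@eq_all _ _ predT) ?all_predT. congr (_ && _).
elim: s {IH} => //= b s IH; case: b => //= k'; by rewrite IH.
Qed.

Lemma G2_sorted w : G2 w <-> sorted ltn (dotseq w).
Proof.
rewrite sorted_pairwise; last exact: ltn_trans.
rewrite /dotseq -pairwise_dsel wseqE; split.
- move=> H; apply/(pairwiseP (inl ord0)) => x y; rewrite !inE size_map size_iota => xL yL xy.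
  rewrite !(nth_map 0) ?size_iota // !nth_iota //.
  by apply: H; rewrite !inordK.
- move/(pairwiseP (inl ord0)) => H x y xy.
  have := H x y; rewrite !inE size_map size_iota !(nth_map 0) ?size_iota // !nth_iota //.
  by rewrite !inord_val; apply.
Qed.

Lemma G2_uniq w x y k : G2 w -> w x = inl k -> w y = inl k -> x = y.
Proof.
move=> H ex ey; case: (ltngtP x y) => h; last exact: val_inj.
- by have := H x y h; rewrite ex ey /= ltnn.
- by have := H y x h; rewrite ex ey /= ltnn.
Qed.

Lemma G2_lt w x y (a b : 'I_n) : G2 w -> w x = inl a -> w y = inl b -> a < b -> x < y.
Proof.
move=> H ex ey ab; case: (ltngtP x y) => // h.
- by have := H y x h; rewrite ex ey /=; lia.
- have e : x = y by apply: val_inj.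
  by move: ex; rewrite e ey => -[e']; move: ab; rewrite e' ltnn.
Qed.

Lemma bposP w k : G1 w -> bpos w k < L /\ w (inord (bpos w k)) = inl k.
Proof.
move=> H; have [j hj] := H k.
have mem : inl k \in wseq w by apply/mapP; exists j; rewrite ?mem_enum ?hj.
split; first by move: (index_mem (inl k) (wseq w)); rewrite mem /wseq size_map size_enum_ord /bpos.
have := nth_index (inl k) mem; rewrite /bpos.
have hs : index (inl k) (wseq w) < L.
  by move: (index_mem (inl k) (wseq w)); rewrite mem /wseq size_map size_enum_ord.
move: hs; rewrite wseqE => hs.
by rewrite (nth_map 0) ?size_iota // nth_iota.
Qed.

Lemma bpos_eq w b k : G1 w -> G2 w -> w b = inl k -> bpos w k = b.
Proof.
move=> H1 H2 hb; have [hl hw] := bposP k H1.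
by have := G2_uniq H2 hw hb => <-; rewrite inordK.
Qed.

Lemma bpos_mono w (a b : 'I_n) : G1 w -> G2 w -> a < b -> bpos w a < bpos w b.
Proof.
move=> H1 H2 ab; have [ha wa] := bposP a H1; have [hb wb] := bposP b H1.
by have := G2_lt H2 wa wb ab; rewrite !inordK.
Qed.

Lemma bpos_le w (a b : 'I_n) : G1 w -> G2 w -> a <= b -> bpos w a <= bpos w b.
Proof.
move=> H1 H2; rewrite leq_eqVlt => /orP [/eqP e|ab]; last by apply/ltnW/bpos_mono.
by have -> : a = b by apply: val_inj.
Qed.

Lemma cdistE a b : a < L -> b < L -> cdist L a b = if a <= b then b - a else b + L - a.
Proof.
move=> aL bL; rewrite /cdist; case: leqP => h.
- by rewrite (_ : b + L - a = (b - a) + L) ?modnDr ?modn_small; lia.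
- by rewrite modn_small; lia.
Qed.

Lemma G_pos0 w : G1 w -> G2 w -> G3 w -> w ord0 = inl ord0.
Proof.
move=> H1 H2 H3; case E: (w ord0) => [k|i]; last by case: (H3 _ _ E).
have [j0 hj0] := H1 ord0.
case: (posnP j0) => h.
  have e : j0 = ord0 by apply: val_inj.
  by move: hj0; rewrite e E.
by have := H2 ord0 j0 h; rewrite E hj0.
Qed.

Lemma Om_G w : inOmega1 w -> [/\ G1 w, G2 w, G3 w & w ord0 = inl ord0].
Proof.
case=> [[Hc [r Hr]] [H0 Hq]].
have w0 : w ord0 = inl ord0 by apply: H0.
have g1 : G1 w.
  move=> k; have : inl k \in wseq w by rewrite -has_pred1 has_count Hc.
  by case/mapP => j _ ->; exists j.
have i0 : inord 0 = ord0 :> 'I_L by apply: val_inj; rewrite /= inordK.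
have dE : dotseq w = iota 0 n.
  suff r0 : rot r (iota 0 n) = iota 0 n by rewrite Hr.
  case: (ltnP r n) => hr; last by rewrite rot_oversize // size_iota.
  have : head 0 (rot r (iota 0 n)) = r.
    by rewrite /rot drop_iota add0n; case E: (n - r) => [|k] /=; lia.
  move=> h; have r0 : 0 = r by move: h; rewrite -Hr /dotseq wseqE /= i0 w0.
  by rewrite -r0 rot0.
have g2 : G2 w by apply/G2_sorted; rewrite dE iota_ltn_sorted.
split=> //.
move=> j i wj.
have j0 : 0 < j.
  rewrite lt0n; apply/negP => /eqP j0'.
  have e : j = ord0 by apply: val_inj.
  by move: wj; rewrite e w0.
have Hq0 := Hq ord0 erefl.
have b0 : bpos w ord0 = 0 by apply: bpos_eq w0.
have S0 : bpos w ord0 < j by rewrite b0.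
have [k Sk kmax] := @arg_maxnP _ ord0 (fun k => bpos w k < j) (fun k => val k) S0.
have [bkL _] := bposP k g1.
have jL : j < L by [].
have inCk : inC w k j.
  rewrite /inC (cdistE bkL jL) (ltnW Sk) subn_gt0 Sk /=.
  case: (ltnP k.+1 n) => hk.
  - have ok : val (ordS k) = k.+1 by rewrite /= modn_small.
    have [bk'L wk'] := bposP (ordS k) g1.
    have h1 : ~~ (bpos w (ordS k) < j).
      by apply/negP => h; have := kmax _ h; rewrite ok /= ltnn.
    have h2 : bpos w (ordS k) != j.
      apply/eqP => e; move: wk'; rewrite e inord_val wj //.
    have h3 : j < bpos w (ordS k) by lia.
    have e : bpos w k <= bpos w (ordS k) by lia.
    by rewrite (cdistE bkL bk'L) e; apply/orP; left; lia.
  - have km : k = m :> nat by have := ltn_ord k; lia.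
    case: (posnP m) => m0.
      have -> : ordS k = k by apply: val_inj; rewrite /= km m0.
      by rewrite eqxx orbT.
    have -> : ordS k = ord0 by apply: val_inj; rewrite /= km modnn.
    have kp : bpos w ord0 < bpos w k by apply: bpos_mono => //; rewrite km.
    rewrite b0 (cdistE bkL (ltn0Sn _)); rewrite b0 in kp.
    have -> : (bpos w k <= 0) = false by rewrite leqNgt kp.
    by apply/orP; left; lia.
have qk : qexp i k 0 = 0.
  have : (if w j is inr i then (if inC w k j then qexp i k ord0 else 0) else 0) <= wt_q w ord0.
    rewrite /wt_q (bigD1 j) //= (bigD1 k) //=; rewrite -addnA; move=> *; exact: leq_addr.
  by rewrite Hq0 wj inCk => /(_ 0); rewrite leqn0 => /eqP.
have ik : i <= k by move: qk; rewrite /qexp; case: (leqP i k).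
have [biL wi] := bposP i g1.
exists (inord (bpos w i)) => //.
by rewrite inordK //; apply: leq_ltn_trans Sk; apply: bpos_le.
Qed.

Lemma G_Om w : G1 w -> G2 w -> G3 w -> inOmega1 w.
Proof.
move=> H1 H2 H3; have w0 := G_pos0 H1 H2 H3.
split; [split|split].
- move=> k; rewrite /wseq count_map count_enum_card.
  have [j hj] := H1 k; rewrite -(card1 j); apply: eq_card => x; rewrite !inE /=.
  by apply/eqP/eqP => [h|->//]; exact: G2_uniq H2 h hj.
- exists 0; rewrite rot0; apply: (irr_sorted_eq ltn_trans ltnn).
  + by apply/G2_sorted.
  + exact: iota_ltn_sorted.
  move=> x; rewrite mem_iota add0n /= /dotseq mem_pmap; apply/mapP/idP.
    by case=> y _; case: y => //= k [->]; exact: ltn_ord.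
  move=> xn; have [j hj] := H1 (Ordinal xn); exists (w j); last by rewrite hj.
  by rewrite /wseq map_f ?mem_enum.
- move=> j k j0 k0; have -> : j = ord0 by apply: val_inj.
  by have -> : k = ord0 by apply: val_inj.
- move=> q q0; have -> : q = ord0 by apply: val_inj.
  rewrite /wt_q big1 // => j _; rewrite big1 // => k _.
  case E: (w j) => [//|i]; case: ifP => // hin.
  suff ik : i <= k by rewrite /qexp ik.
  rewrite leqNgt; apply/negP => ki.
  have [j' j'j wj'] := H3 _ _ E.
  have bi := bpos_eq H1 H2 wj'.
  have k1 : k.+1 < n by have := ltn_ord i; lia.
  have ok : val (ordS k) = k.+1 by rewrite /= modn_small.
  have m1 : bpos w k < bpos w (ordS k) by apply: bpos_mono => //; rewrite ok.
  have m2 : bpos w (ordS k) <= bpos w i by apply: bpos_le => //; rewrite ok.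
  have [bkL _] := bposP k H1; have [bk'L _] := bposP (ordS k) H1.
  move: hin; rewrite /inC (cdistE bkL (ltn_ord j)) (cdistE bkL bk'L).
  rewrite bi in m2.
  have -> : bpos w k <= j by lia.
  have -> : bpos w k <= bpos w (ordS k) by lia.
  have -> : (bpos w (ordS k) == bpos w k) = false by apply/eqP; lia.
  rewrite orbF; lia.
Qed.

Definition lbl (x : letter n) : 'I_n := match x with inl a => a | inr a => a end.
Lemma blockE w i j : (j \in block w i) = (lbl (w j) == i).
Proof.
rewrite inE; case: (w j) => a /=.
  by apply/orP/eqP => [[/eqP [->] | /eqP //] | ->]; [|left].
by apply/eqP/eqP => [[->]|->].
Qed.

Lemma G_part1 w : G1 w -> partition (blocks w) [set: 'I_L] /\ #|blocks w| = n.
Proof.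
move=> H1.
have lab : forall j, exists i, j \in block w i.
  by move=> j; case E: (w j) => [i|i]; exists i; rewrite inE E eqxx ?orbT.
have binj : injective (block w).
  move=> i i' e; have [j hj] := H1 i; have : j \in block w i by rewrite inE hj eqxx.
  by rewrite e inE hj => /orP [/eqP [->] | //].
split; last by rewrite card_imset // card_ord.
apply/and3P; split.
- rewrite eqEsubset subsetT /=; apply/subsetP => j _; have [i hi] := lab j.
  by apply/bigcupP; exists (block w i) => //; apply: imset_f.
- apply/trivIsetP => A B /imsetP [i _ ->] /imsetP [i' _ ->] ne.
  rewrite -setI_eq0; apply/eqP/setP => j; rewrite in_setI !blockE in_set0.
  apply/negbTE/negP => /andP [/eqP h1 /eqP h2].
  suff e : i = i' by rewrite e eqxx in ne.
  by rewrite -h1 -h2.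
- apply/imsetP => [[i _ e]]; have [j hj] := H1 i.
  have : j \in block w i by rewrite inE hj eqxx.
  by rewrite -e inE.
Qed.

Lemma step_inr w1 w2 (j : 'I_L) i : G2 w2 -> G3 w1 -> blocks w1 = blocks w2 ->
  (forall j' : 'I_L, j' < j -> w1 j' = w2 j') -> w1 j = inr i -> w2 j = inr i.
Proof.
move=> H2 H3 eb IH e1.
have [j0 lt0 w10] := H3 _ _ e1.
have w20 : w2 j0 = inl i by rewrite -IH.
have : block w1 i \in blocks w2 by rewrite -eb; apply: imset_f.
case/imsetP => i' _ e.
have : j0 \in block w2 i' by rewrite -e inE w10 eqxx.
rewrite inE w20 => /orP [/eqP [ei]|//].
have : j \in block w2 i' by rewrite -e inE e1 eqxx orbT.
rewrite inE -ei => /orP [/eqP h|/eqP //].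
by have := G2_uniq H2 h w20 => ej; rewrite ej ltnn in lt0.
Qed.

Lemma step_inl w1 w2 (j : 'I_L) k k' : G1 w1 -> G2 w1 -> G2 w2 ->
  (forall j' : 'I_L, j' < j -> w1 j' = w2 j') -> w1 j = inl k -> w2 j = inl k' -> k <= k'.
Proof.
move=> H1 H2 H2' IH e1 e2; rewrite leqNgt; apply/negP => kk.
have [j1 h1] := H1 k'; case: (ltngtP j1 j) => c.
- have h2 : w2 j1 = inl k' by rewrite -IH.
  by have := G2_uniq H2' h2 e2 => ej; rewrite ej ltnn in c.
- by have := H2 j j1 c; rewrite e1 h1 /=; lia.
- have ej : j1 = j by apply: val_inj.
  by move: h1; rewrite ej e1 => -[ek]; rewrite ek ltnn in kk.
Qed.

Lemma G_part2 w1 w2 : G1 w1 -> G2 w1 -> G3 w1 -> G1 w2 -> G2 w2 -> G3 w2 ->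
  blocks w1 = blocks w2 -> w1 = w2.
Proof.
move=> H1 H2 H3 H1' H2' H3' eb.
suff h : forall x (j : 'I_L), j < x -> w1 j = w2 j.
  by apply/ffunP => j; apply: (h j.+1).
elim=> [//|x IH] j; rewrite ltnS leq_eqVlt => /orP [/eqP ej|]; last exact: IH.
have IH' : forall j' : 'I_L, j' < j -> w1 j' = w2 j' by move=> j' h; apply: IH; rewrite -ej.
have IH'' : forall j' : 'I_L, j' < j -> w2 j' = w1 j' by move=> j' h; rewrite IH'.
case E1: (w1 j) => [k|i]; case E2: (w2 j) => [k'|i'].
- have a := step_inl H1 H2 H2' IH' E1 E2; have b := step_inl H1' H2' H2 IH'' E2 E1.
  by congr inl; apply/val_inj/eqP; rewrite eqn_leq a b.
- by have := step_inr H2 H3' (esym eb) IH'' E2; rewrite E1.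
- by have := step_inr H2' H3 eb IH' E1; rewrite E2.
- by have := step_inr H2' H3 eb IH' E1; rewrite E2 => -[->].
Qed.

Section Part3.
Variable P : {set {set 'I_L}}.
Hypothesis hP : partition P [set: 'I_L].
Hypothesis hc : #|P| = n.

Let hcov : cover P = [set: 'I_L] := cover_partition hP.
Let htriv : trivIset P.
Proof. by case/and3P: hP. Qed.
Let h0 : set0 \notin P.
Proof. by case/and3P: hP. Qed.

Lemma inb j : j \in pblock P j.
Proof. by rewrite mem_pblock hcov inE. Qed.

Definition fst (j : 'I_L) : 'I_L := [arg min_(j' < j in pblock P j) val j'].
Definition start j := fst j == j.
Definition cnt x := \sum_(0 <= y < x) (start (inord y : 'I_L) : nat).
Definition lab j := cnt (fst j).
Definition wP : word L n :=
  [ffun j => if start j then inl (inord (lab j)) else inr (inord (lab j))].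

Lemma fstP j : fst j \in pblock P j /\ forall j', j' \in pblock P j -> fst j <= j'.
Proof.
rewrite /fst; case: arg_minnP => [|x hx hmin]; first exact: inb.
by split.
Qed.

Lemma fst_same j j' : j' \in pblock P j -> fst j' = fst j.
Proof.
move=> h; have e := same_pblock htriv h.
have [a1 a2] := fstP j; have [b1 b2] := fstP j'.
rewrite e in b1 b2.
by apply: val_inj; apply/eqP; rewrite eqn_leq a2 ?b2.
Qed.

Lemma fst_fst j : fst (fst j) = fst j.
Proof. exact: fst_same (fstP j).1. Qed.

Lemma fst_le j : fst j <= j.
Proof. exact: (fstP j).2 j (inb j). Qed.

Lemma pb_fst j : pblock P (fst j) = pblock P j.
Proof. exact: same_pblock htriv (fstP j).1. Qed.

Lemma start_fst j : start (fst j).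
Proof. by rewrite /start fst_fst. Qed.

Lemma cntS x : cnt x.+1 = cnt x + start (inord x : 'I_L).
Proof. by rewrite /cnt big_nat_recr. Qed.

Lemma cnt0 : cnt 0 = 0.
Proof. by rewrite /cnt big_geq. Qed.

Lemma cnt_mono x y : x <= y -> cnt x <= cnt y.
Proof.
move=> /subnKC <-; elim: (y - x) => [|d IH]; first by rewrite addn0.
by rewrite addnS cntS; apply: leq_trans IH (leq_addr _ _).
Qed.

Lemma cnt_start_lt (a b : 'I_L) : start a -> a < b -> cnt a < cnt b.
Proof.
move=> sa ab; apply: leq_trans (cnt_mono ab).
by rewrite cntS inord_val sa addn1.
Qed.

Lemma cntL : cnt L = n.
Proof.
rewrite /cnt big_mkord.
rewrite (eq_bigr (fun j : 'I_L => if start j then 1 else 0)); last first.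
  by move=> j _; rewrite inord_val; case: (start j).
rewrite -big_mkcond sum1dep_card -hc.
have eP : [set pblock P x | x in [set x | start x]] = P.
  apply/setP => B; apply/imsetP/idP.
    by case=> j _ ->; apply: pblock_mem; rewrite hcov inE.
  move=> hB; have : B != set0 by apply: contraNneq h0 => <-.
  case/set0Pn => x hx; exists (fst x); first by rewrite inE start_fst.
  by rewrite pb_fst (def_pblock htriv hB hx).
rewrite -eP card_in_imset //.
move=> a b; rewrite !inE => sa sb e.
have : b \in pblock P a by rewrite e inb.
move/fst_same; move/eqP: sa => ->; by move/eqP: sb => ->.
Qed.

Lemma lab_lt j : lab j < n.
Proof.
rewrite -cntL /lab; apply: leq_trans (cnt_mono (ltn_ord (fst j))).
by rewrite cntS inord_val start_fst addn1.
Qed.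

Lemma lab_eq j j' : (lab j == lab j') = (j' \in pblock P j).
Proof.
apply/eqP/idP => [e|h]; last by rewrite /lab (fst_same h).
have ef : fst j = fst j'.
  case: (ltngtP (fst j) (fst j')) => c; last exact: val_inj.
  - by have := cnt_start_lt (start_fst j) c; rewrite -/(lab j) -/(lab j') e ltnn.
  - by have := cnt_start_lt (start_fst j') c; rewrite -/(lab j) -/(lab j') e ltnn.
by rewrite -pb_fst ef pb_fst inb.
Qed.

Lemma wP_lbl j : lbl (wP j) = inord (lab j).
Proof. by rewrite ffunE; case: ifP. Qed.

Lemma inord_eq a b : a < n -> b < n -> (inord a == inord b :> 'I_n) = (a == b).
Proof. by move=> ha hb; rewrite -(inj_eq val_inj) /= !inordK. Qed.

Lemma wP_G1 : G1 wP.
Proof.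
move=> k.
have ex : exists x, k < cnt x.+1 by exists l; rewrite cntL.
case: (ex_minnP ex) => x0 hx0 hmin.
have x0L : x0 < L by rewrite ltnS; apply: hmin; rewrite cntL.
have ck : cnt x0 <= k.
  case: x0 hx0 hmin x0L => [|y] hx0 hmin _; first by rewrite cnt0.
  by rewrite leqNgt; apply/negP => /hmin; rewrite ltnn.
move: hx0; rewrite cntS; case sx: (start (inord x0)); last by rewrite addn0; lia.
rewrite addn1 ltnS => kc.
have ek : cnt x0 = k by apply/eqP; rewrite eqn_leq ck kc.
exists (inord x0); rewrite ffunE sx /lab (eqP sx) inordK // ek.
by rewrite inord_val.
Qed.

Lemma wP_G2 : G2 wP.
Proof.
move=> x y xy; rewrite !ffunE; case sx: (start x); case sy: (start y) => //=.
rewrite !inordK ?lab_lt // /lab (eqP sx) (eqP sy).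
exact: cnt_start_lt.
Qed.

Lemma wP_G3 : G3 wP.
Proof.
move=> j i; rewrite ffunE; case sj: (start j) => // -[ei].
exists (fst j).
  by rewrite ltn_neqAle fst_le andbT; apply/negP => /eqP e; rewrite /start (val_inj e) eqxx in sj.
by rewrite ffunE start_fst /lab fst_fst ei.
Qed.

Lemma wP_blocks : blocks wP = P.
Proof.
apply/setP => B; apply/imsetP/idP.
  case=> i _ ->; have [j hj] := wP_G1 i.
  suff -> : block wP i = pblock P j by apply: pblock_mem; rewrite hcov inE.
  apply/setP => x; rewrite blockE wP_lbl.
  have -> : i = lbl (wP j) by rewrite hj.
  by rewrite wP_lbl inord_eq ?lab_lt // eq_sym lab_eq.
move=> hB; have : B != set0 by apply: contraNneq h0 => <-.
case/set0Pn => x hx; exists (inord (lab x)) => //.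
apply/setP => y; rewrite blockE wP_lbl inord_eq ?lab_lt // eq_sym lab_eq.
by rewrite (def_pblock htriv hB hx).
Qed.

End Part3.
End S.

Theorem proposition5p6 (L n : nat) (hn : 1 <= n) (hnL : n <= L) :
  (forall w : word L n, inOmega1 w ->
     partition (blocks w) [set: 'I_L] /\ #|blocks w| = n) /\
  (forall w1 w2 : word L n, inOmega1 w1 -> inOmega1 w2 ->
     blocks w1 = blocks w2 -> w1 = w2) /\
  (forall P : {set {set 'I_L}}, partition P [set: 'I_L] -> #|P| = n ->
     exists w : word L n, inOmega1 w /\ blocks w = P).
Proof.
case: n hn hnL => [//|m] _; case: L => [//|l] hnL.
split; [|split].
- by move=> w /Om_G [g1 g2 g3 _]; exact: G_part1 g1.
- by move=> w1 w2 /Om_G [a1 a2 a3 _] /Om_G [b1 b2 b3 _]; exact: G_part2.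
- move=> P hP hc; exists (@wP l m P); split; last exact: wP_blocks.
  apply: G_Om; [exact: wP_G1 | exact: wP_G2 | exact: wP_G3].
Qed.
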